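(* Let $\Phi$ be a sound join doctrine dual to $\Psi^{\mathrm{op}}$ (so $\Psi=\Phi^*$). Then the functors $X\mapsto\Phi\mathbf{AlgLat}(X,2)$ and $A\mapsto\Psi^{\mathrm{op}}\mathbf{Inf}(A,2)$ (acting by precomposition) form a dual equivalence of categories between $\Phi\mathbf{AlgLat}$ and $\Psi^{\mathrm{op}}\mathbf{Inf}$. Moreover, $\Phi\mathbf{AlgLat}=\Phi\mathbf{CtsLat}$ (so that the same functors give a dual equivalence between $\Phi\mathbf{CtsLat}$ and $\Psi^{\mathrm{op}}\mathbf{Inf}$) iff $\omega\notin\Phi$, iff $\omega\in\Psi$.
   Context: A join doctrine is a class $\Phi$ of posets such that: (1) the one-element poset is in $\Phi$; (2) if a poset $P$ is the union of a set $\mathcal{S}$ of subposets each in $\Phi$ and $\mathcal{S}$ (ordered by inclusion) is in $\Phi$, then $P\in\Phi$; (3) if $f:P\to Q$ is monotone with cofinal image and $P\in\Phi$ then $Q\in\Phi$; (4) cofinal subposets of members of $\Phi$ are in $\Phi$. $\mathcal{L}(X)$ = lower subsets of a poset $X$; $\Phi(X)$ = those belonging (as subposets) to $\Phi$. $\Phi$-join = join of a subset in $\Phi$; $\Psi^{\mathrm{op}}$-meet = meet of a subset $S$ with $S^{\mathrm{op}}\in\Psi$. $\Phi$ is sound dual to $\Psi^{\mathrm{op}}$ if for all posets $X,Y$, $\phi\in\Phi(Y)$, $\psi\in\Psi(X)$, monotone $F:X^{\mathrm{op}}\times Y\to2$: $\bigwedge_{x\in\psi}\bigvee_{y\in\phi}F=\bigvee_{y\in\phi}\bigwedge_{x\in\psi}F$,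 and for every $X$ the closure of $\Psi(X)$ in $\mathcal{L}(X)$ under unions of subfamilies belonging to $\Phi$ is $\mathcal{L}(X)$. In a complete lattice: $\Downarrow x=\bigcap\{\phi\in\Phi(X)\mid x\le\bigvee\phi\}$, $x$ $\Phi$-compact iff $x\in\Downarrow x$; $\Phi$-algebraic lattice: complete lattice generated under $\Phi$-joins by its $\Phi$-compact elements; $\Phi$-continuous lattice: complete lattice where each $x$ has $\phi\in\Phi(X)$ with $\phi\subseteq\Downarrow x$, $x\le\bigvee\phi$. $\Phi\mathbf{CtsLat}$ = $\Phi$-continuous lattices with maps preserving arbitrary meets and $\Phi$-joins; $\Phi\mathbf{AlgLat}$ its full subcategory of $\Phi$-algebraic lattices. $\Psi^{\mathrm{op}}\mathbf{Inf}$ = posets with all $\Psi^{\mathrm{op}}$-meets and maps preserving them. $2=\{0<1\}$; hom-sets carry the pointwise order. $\omega$ = naturals. *)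

(* Defs.v *)
From Stdlib Require Import Arith.

Definition rel (T : Type) := T -> T -> Prop.

Record is_poset (T : Type) (le : rel T) : Prop := {
  po_refl : forall x, le x x;
  po_trans : forall x y z, le x y -> le y z -> le x z;
  po_antisym : forall x y, le x y -> le y x -> x = y }.
Arguments is_poset {T} le.

(* A class of posets. *)
Definition Doctrine := forall T : Type, rel T -> Prop.

Definition opp {T : Type} (le : rel T) : rel T := fun x y => le y x.

Definition sub_le {T : Type} (le : rel T) (S : T -> Prop) : rel {x : T | S x} :=
  fun a b => le (proj1_sig a) (proj1_sig b).

Definition inD (D : Doctrine) {T : Type} (le : rel T) (S : T -> Prop) : Prop :=
  D {x : T | S x} (sub_le le S).

Definition lower {T : Type} (le : rel T) (S : T -> Prop) : Prop :=
  forall x y, le x y -> S y -> S x.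

Definition DX (D : Doctrine) {T : Type} (le : rel T) (S : T -> Prop) : Prop :=
  lower le S /\ inD D le S.

Definition incl {T : Type} : rel (T -> Prop) := fun A B => forall x, A x -> B x.

Definition unit_le : rel unit := fun _ _ => True.

Definition join_doctrine (D : Doctrine) : Prop :=
  D unit unit_le /\
  (forall (T : Type) (le : rel T), is_poset le ->
     forall SS : (T -> Prop) -> Prop,
       (forall x, exists A, SS A /\ A x) ->
       (forall A, SS A -> inD D le A) ->
       inD D (@incl T) SS ->
       D T le) /\
  (forall (P : Type) (leP : rel P) (Q : Type) (leQ : rel Q) (f : P -> Q),
     is_poset leP -> is_poset leQ ->
     (forall x y, leP x y -> leQ (f x) (f y)) ->
     (forall q, exists p, leQ q (f p)) ->
     D P leP -> D Q leQ) /\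
  (forall (T : Type) (le : rel T) (S : T -> Prop), is_poset le ->
     (forall x, exists y, S y /\ le x y) ->
     D T le -> inD D le S).

Definition is_lub {T : Type} (le : rel T) (S : T -> Prop) (j : T) : Prop :=
  (forall x, S x -> le x j) /\ (forall u, (forall x, S x -> le x u) -> le j u).

Definition is_glb {T : Type} (le : rel T) (S : T -> Prop) (m : T) : Prop :=
  (forall x, S x -> le m x) /\ (forall u, (forall x, S x -> le u x) -> le u m).

Definition img {T U : Type} (f : T -> U) (S : T -> Prop) : U -> Prop :=
  fun y => exists x, S x /\ f x = y.

Definition complete_lattice {T : Type} (le : rel T) : Prop :=
  is_poset le /\ forall S : T -> Prop, exists j, is_lub le S j.

Definition below_join {T : Type} (le : rel T) (phi : T -> Prop) (x : T) : Prop :=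
  exists j, is_lub le phi j /\ le x j.

Definition dwa (D : Doctrine) {T : Type} (le : rel T) (x y : T) : Prop :=
  forall phi : T -> Prop, DX D le phi -> below_join le phi x -> phi y.

Definition compact (D : Doctrine) {T : Type} (le : rel T) (x : T) : Prop :=
  dwa D le x x.

Definition D_join_closed (D : Doctrine) {T : Type} (le : rel T) (C : T -> Prop) : Prop :=
  forall (S : T -> Prop) (j : T), inD D le S -> (forall x, S x -> C x) ->
    is_lub le S j -> C j.

Definition phi_algebraic (D : Doctrine) {T : Type} (le : rel T) : Prop :=
  complete_lattice le /\
  forall C : T -> Prop, (forall x, compact D le x -> C x) -> D_join_closed D le C ->
    forall x, C x.

Definition phi_continuous (D : Doctrine) {T : Type} (le : rel T) : Prop :=
  complete_lattice le /\
  forall x, exists phi : T -> Prop,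
    DX D le phi /\ (forall y, phi y -> dwa D le x y) /\ below_join le phi x.

(* Morphisms of Phi CtsLat / Phi AlgLat: preserve arbitrary meets and Phi-joins. *)
Definition phi_hom (D : Doctrine) {X Y : Type} (leX : rel X) (leY : rel Y) (f : X -> Y) : Prop :=
  (forall S m, is_glb leX S m -> is_glb leY (img f S) (f m)) /\
  (forall S j, inD D leX S -> is_lub leX S j -> is_lub leY (img f S) (f j)).

(* Objects of Psi^op Inf: posets with all Psi^op-meets (meets of S with S^op in Psi). *)
Definition psiop_inf (D : Doctrine) {T : Type} (le : rel T) : Prop :=
  is_poset le /\ forall S : T -> Prop, inD D (opp le) S -> exists m, is_glb le S m.

(* Morphisms of Psi^op Inf: preserve Psi^op-meets. *)
Definition psiop_hom (D : Doctrine) {A B : Type} (leA : rel A) (leB : rel B) (g : A -> B) : Prop :=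
  forall S m, inD D (opp leA) S -> is_glb leA S m -> is_glb leB (img g S) (g m).

Definition le2 : rel bool := fun a b => a = true -> b = true.

(* Hom-sets into 2, with the pointwise order. *)
Definition Hom {T : Type} (P : (T -> bool) -> Prop) : Type := {f : T -> bool | P f}.

Definition leHom {T : Type} (P : (T -> bool) -> Prop) : rel (Hom P) :=
  fun h k => forall x, le2 (proj1_sig h x) (proj1_sig k x).

Definition is_iso (H : forall X Y : Type, rel X -> rel Y -> (X -> Y) -> Prop)
  {X Y : Type} (leX : rel X) (leY : rel Y) (f : X -> Y) : Prop :=
  H X Y leX leY f /\
  exists g : Y -> X, H Y X leY leX g /\ (forall x, g (f x) = x) /\ (forall y, f (g y) = y).

(* Phi is sound dual to Psi^op. Meets/joins in 2 are written out:
   a meet in 2 is true iff all entries are true, a join iff some entry is. *)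
Definition sound_dual (Phi Psi : Doctrine) : Prop :=
  (forall (X : Type) (leX : rel X) (Y : Type) (leY : rel Y),
     is_poset leX -> is_poset leY ->
     forall (phi : Y -> Prop) (psi : X -> Prop), DX Phi leY phi -> DX Psi leX psi ->
     forall F : X -> Y -> bool,
       (* monotone on X^op x Y *)
       (forall x x' y y', leX x' x -> leY y y' -> le2 (F x y) (F x' y')) ->
       ((forall x, psi x -> exists y, phi y /\ F x y = true) <->
        (exists y, phi y /\ forall x, psi x -> F x y = true))) /\
  (forall (X : Type) (leX : rel X), is_poset leX ->
     forall C : (X -> Prop) -> Prop,
       (forall L, DX Psi leX L -> C L) ->
       (forall AA : (X -> Prop) -> Prop,
          (forall L, AA L -> lower leX L /\ C L) -> inD Phi (@incl X) AA ->
          C (fun x => exists L, AA L /\ L x)) ->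
       forall L, lower leX L -> C L).

(* Main.v *)
From Stdlib Require Import Reals Lra.
Require Import Defs.
From Stdlib Require Import Classical ClassicalEpsilon FunctionalExtensionality PropExtensionality ProofIrrelevance Arith Lia.

Definition bP (P : Prop) : bool := if excluded_middle_informative P then true else false.

Lemma bP_true (P : Prop) : bP P = true <-> P.
Proof. unfold bP; destruct (excluded_middle_informative P); split; intros; auto; discriminate. Qed.

Lemma Hom_eq {T} (P : (T -> bool) -> Prop) (h k : Hom P) :
  (forall x, proj1_sig h x = proj1_sig k x) -> h = k.
Proof.
  destruct h as [h ph], k as [k pk]; simpl; intro E.
  assert (h = k) by (apply functional_extensionality; auto). subst.
  f_equal; apply proof_irrelevance.
Qed.

Lemma glb2_img {T} (f : T -> bool) (S : T -> Prop) b :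
  is_glb le2 (img f S) b <-> (b = true <-> forall x, S x -> f x = true).
Proof.
  unfold is_glb, img, le2; split.
  - intros [H1 H2]; split.
    + intros Hb x Sx. apply (H1 (f x)); eauto.
    + intros H. apply (H2 true); auto. intros c [x [Sx <-]] _. auto.
  - intros H; split.
    + intros c [x [Sx <-]] Hb. apply H; auto.
    + intros u Hu Hut. apply H. intros x Sx. apply (Hu (f x)); eauto.
Qed.

Lemma lub2_img {T} (f : T -> bool) (S : T -> Prop) b :
  is_lub le2 (img f S) b <-> (b = true <-> exists x, S x /\ f x = true).
Proof.
  unfold is_lub, img, le2; split.
  - intros [H1 H2]; split.
    + intros Hb. apply NNPP; intro N.
      assert (false = true); [|discriminate].
      apply (H2 false); auto. intros c [x [Sx <-]] Hc. exfalso; eauto.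
    + intros [x [Sx Hx]]. apply (H1 (f x)); eauto.
  - intros H; split.
    + intros c [x [Sx <-]] Hc. apply H; eauto.
    + intros u Hu Hb. apply H in Hb. destruct Hb as [x [Sx Hx]].
      apply (Hu (f x)); eauto.
Qed.

Lemma le2_poset : is_poset le2.
Proof.
  split; unfold le2; auto.
  intros [|] [|] H1 H2; auto. symmetry; auto.
Qed.

Lemma sub_poset {T} (le : rel T) S : is_poset le -> is_poset (sub_le le S).
Proof.
  intros [R Tr A]; split; unfold sub_le; eauto.
  intros [x px] [y py]; simpl; intros H1 H2.
  assert (x = y) by auto. subst. f_equal; apply proof_irrelevance.
Qed.

Lemma incl_poset T : is_poset (@incl T).
Proof.
  split; unfold incl; eauto.
  intros A B H1 H2. apply functional_extensionality; intro x.
  apply propositional_extensionality; split; auto.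
Qed.

Lemma opp_poset {T} (le : rel T) : is_poset le -> is_poset (opp le).
Proof. intros [R Tr A]; split; unfold opp; eauto. Qed.

Lemma leHom_poset {T} (P : (T -> bool) -> Prop) : is_poset (leHom P).
Proof.
  split; unfold leHom, le2; eauto.
  intros h k H1 H2. apply Hom_eq. intro x. specialize (H1 x); specialize (H2 x).
  destruct (proj1_sig h x), (proj1_sig k x); auto. symmetry; auto.
Qed.

Lemma nat_poset : is_poset Peano.le.
Proof. split; intros; lia. Qed.

Lemma unit_poset : is_poset unit_le.
Proof. split; unfold unit_le; auto. intros [] [] _ _; auto. Qed.

Lemma lub_unique {T} (le : rel T) S j j' : is_poset le -> is_lub le S j -> is_lub le S j' -> j = j'.
Proof. intros [_ _ A] [H1 H2] [H1' H2']. apply A; auto. Qed.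

Lemma glb_unique {T} (le : rel T) S j j' : is_poset le -> is_glb le S j -> is_glb le S j' -> j = j'.
Proof. intros [_ _ A] [H1 H2] [H1' H2']. apply A; auto. Qed.

Lemma iso_glb {X Y} (leX : rel X) (leY : rel Y) (f : X -> Y) (g : Y -> X) :
  (forall y, f (g y) = y) -> (forall x x', leX x x' <-> leY (f x) (f x')) ->
  forall S m, is_glb leX S m -> is_glb leY (img f S) (f m).
Proof.
  intros fg E S m [H1 H2]; split.
  - intros c [x [Sx <-]]. apply E; auto.
  - intros u Hu. rewrite <- (fg u). apply E. apply H2. intros x Sx.
    apply E. rewrite fg. apply Hu. exists x; auto.
Qed.

Lemma iso_lub {X Y} (leX : rel X) (leY : rel Y) (f : X -> Y) (g : Y -> X) :
  (forall y, f (g y) = y) -> (forall x x', leX x x' <-> leY (f x) (f x')) ->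
  forall S m, is_lub leX S m -> is_lub leY (img f S) (f m).
Proof.
  intros fg E S m [H1 H2]; split.
  - intros c [x [Sx <-]]. apply E; auto.
  - intros u Hu. rewrite <- (fg u). apply E. apply H2. intros x Sx.
    apply E. rewrite fg. apply Hu. exists x; auto.
Qed.

Lemma least_exists (P : nat -> Prop) : (exists n, P n) -> exists n, P n /\ forall m, P m -> n <= m.
Proof.
  intros [n Hn]. revert Hn. induction n as [n IH] using lt_wf_ind. intro Hn.
  destruct (classic (exists m, m < n /\ P m)) as [[m [Hm Pm]]|N].
  - exact (IH m Hm Pm).
  - exists n; split; auto. intros m Pm. destruct (le_lt_dec n m); auto.
    exfalso; eauto.
Qed.

Section Doc.
Variable D : Doctrine.
Hypothesis HD : join_doctrine D.

Lemma D_map {P Q} (leP : rel P) (leQ : rel Q) (f : P -> Q) :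
  is_poset leP -> is_poset leQ -> (forall x y, leP x y -> leQ (f x) (f y)) ->
  (forall q, exists p, leQ q (f p)) -> D P leP -> D Q leQ.
Proof. destruct HD as [_ [_ [H3 _]]]. eauto. Qed.

Lemma D_to_inD {P Q} (leP : rel P) (le : rel Q) (f : P -> Q) (S : Q -> Prop) :
  is_poset leP -> is_poset le -> (forall x y, leP x y -> le (f x) (f y)) ->
  (forall x, S (f x)) -> (forall y, S y -> exists x, le y (f x)) -> D P leP -> inD D le S.
Proof.
  intros PP PQ M HS C HP. unfold inD.
  apply (D_map leP (sub_le le S) (fun x => exist _ (f x) (HS x))); auto.
  - apply sub_poset; auto.
  - intros [q qs]. destruct (C q qs) as [x Hx]. exists x. exact Hx.
Qed.

Lemma inD_to_D {T Q} (le : rel T) (S : T -> Prop) (leQ : rel Q) (f : T -> Q) :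
  is_poset le -> is_poset leQ -> (forall x y, S x -> S y -> le x y -> leQ (f x) (f y)) ->
  (forall q, exists x, S x /\ leQ q (f x)) -> inD D le S -> D Q leQ.
Proof.
  intros PT PQ M C H. unfold inD in H.
  apply (D_map (sub_le le S) leQ (fun x => f (proj1_sig x))); auto.
  - apply sub_poset; auto.
  - intros [x px] [y py]; simpl; unfold sub_le; simpl; auto.
  - intros q. destruct (C q) as [x [Sx Hx]]. exists (exist _ x Sx). exact Hx.
Qed.

Lemma inD_full {T} (le : rel T) : is_poset le -> D T le -> inD D le (fun _ => True).
Proof. intros P H. apply (D_to_inD le le (fun x => x)); eauto; intros; destruct P; eauto. Qed.

Lemma inD_full_inv {T} (le : rel T) : is_poset le -> inD D le (fun _ => True) -> D T le.
Proof. intros P H. apply (inD_to_D le (fun _ => True) le (fun x => x)); eauto. intro q; exists q; destruct P; auto. Qed.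

Lemma inD_map {T Q} (le : rel T) (S : T -> Prop) (leQ : rel Q) (f : T -> Q) (S' : Q -> Prop) :
  is_poset le -> is_poset leQ -> (forall x y, S x -> S y -> le x y -> leQ (f x) (f y)) ->
  (forall x, S x -> S' (f x)) -> (forall q, S' q -> exists x, S x /\ leQ q (f x)) ->
  inD D le S -> inD D leQ S'.
Proof.
  intros PT PQ M HS C H. unfold inD in H.
  apply (D_to_inD (sub_le le S) leQ (fun x => f (proj1_sig x))); auto.
  - apply sub_poset; auto.
  - intros [x px] [y py]; unfold sub_le; simpl; auto.
  - intros [x px]; simpl; auto.
  - intros q Hq. destruct (C q Hq) as [x [Sx Hx]]. exists (exist _ x Sx). exact Hx.
Qed.

Lemma inD_up {T} (le : rel T) (S S' : T -> Prop) : is_poset le -> inD D le S ->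
  (forall x, S x -> S' x) -> (forall x, S' x -> exists y, S y /\ le x y) -> inD D le S'.
Proof.
  intros P H Sub C. apply (inD_map le S le (fun x => x) S'); auto.
Qed.

Lemma inD_ext {T} (le : rel T) (S S' : T -> Prop) : is_poset le -> inD D le S ->
  (forall x, S x <-> S' x) -> inD D le S'.
Proof.
  intros P H E. apply (inD_up le S); auto.
  - intros; apply E; auto.
  - intros x Hx; exists x; split; [apply E; auto| destruct P; auto].
Qed.

Lemma inD_down {T} (le : rel T) (S S' : T -> Prop) : is_poset le -> inD D le S' ->
  (forall x, S x -> S' x) -> (forall x, S' x -> exists y, S y /\ le x y) -> inD D le S.
Proof.
  intros P H Sub C. destruct HD as [_ [_ [_ H4]]].
  assert (H' := H4 _ (sub_le le S') (fun t => S (proj1_sig t)) (sub_poset le S' P)).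
  assert (inD D (sub_le le S') (fun t => S (proj1_sig t))) as H''.
  { apply H'; auto. intros [x px]. destruct (C x px) as [y [Sy Hy]].
    exists (exist _ y (Sub y Sy)); simpl; split; auto. }
  unfold inD at 1 in H''.
  apply (D_to_inD (sub_le (sub_le le S') (fun t => S (proj1_sig t))) le (fun t => proj1_sig (proj1_sig t)) S); auto.
  all: try (apply sub_poset, sub_poset, P).
  all: try (intros [[x px] qx]; simpl; auto; fail).
  all: try (intros y Sy; exists (exist _ (exist _ y (Sub y Sy)) Sy); simpl; destruct P; auto; fail).
Qed.

Lemma inD_top {T} (le : rel T) (S : T -> Prop) t : is_poset le -> S t ->
  (forall x, S x -> le x t) -> inD D le S.
Proof.
  intros P St Ht. destruct HD as [H1 _].
  apply (D_to_inD unit_le le (fun _ => t)); auto using unit_poset.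
  all: try (intros; destruct P; auto; fail).
  all: try (intros y Sy; exists tt; auto).
Qed.

Lemma inD_union {T} (le : rel T) (FF : (T -> Prop) -> Prop) : is_poset le ->
  (forall A, FF A -> inD D le A) -> inD D (@incl T) FF ->
  inD D le (fun x => exists A, FF A /\ A x).
Proof.
  intros P HA HF. set (L := fun x => exists A, FF A /\ A x).
  destruct HD as [_ [H2 _]].
  unfold inD at 1.
  apply (H2 _ (sub_le le L) (sub_poset le L P)
    (fun B => exists A, FF A /\ forall t, B t <-> A (proj1_sig t))).
  - intros [x [A [FA Ax]]]. exists (fun t => A (proj1_sig t)). split; simpl; auto.
    exists A; split; auto. tauto.
  - intros B [A [FA E]]. specialize (HA A FA). unfold inD in HA |- *.
    assert (LA : forall x, A x -> L x) by (intros x Ax; exists A; auto).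
    assert (BA : forall x (p : A x), B (exist _ x (LA x p))) by (intros x p; apply E; exact p).
    apply (D_map (sub_le le A) _ (fun a => exist _ (exist _ (proj1_sig a) (LA _ (proj2_sig a))) (BA _ (proj2_sig a)))).
    + apply sub_poset, P.
    + apply sub_poset, sub_poset, P.
    + intros [x px] [y py]; unfold sub_le; simpl; auto.
    + intros [[x px] qx]. assert (Ax : A x) by (apply (E (exist _ x px)); exact qx).
      exists (exist _ x Ax); unfold sub_le; simpl. destruct P; auto.
    + exact HA.
  - unfold inD at 1. unfold inD in HF.
    assert (FB : forall A (p : FF A), exists A', FF A' /\ forall t : sig L, (fun t => A (proj1_sig t)) t <-> A' (proj1_sig t)).
    { intros A p; exists A; split; auto; tauto. }
    apply (D_map (sub_le (@incl T) FF) _ (fun a => exist _ (fun t : sig L => proj1_sig a (proj1_sig t)) (FB _ (proj2_sig a)))).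
    + apply sub_poset, incl_poset.
    + apply sub_poset, incl_poset.
    + intros [x px] [y py]; unfold sub_le, incl; simpl; auto.
    + intros [B [A [FA E]]]. exists (exist _ A FA); unfold sub_le, incl; simpl.
      intros t Bt. apply E; auto.
    + exact HF.
Qed.

End Doc.

Lemma phi_hom_mono (D : Doctrine) {X Y} (leX : rel X) (leY : rel Y) f :
  is_poset leX -> phi_hom D leX leY f -> forall x y, leX x y -> leY (f x) (f y).
Proof.
  intros PX [Hm _] x y Hxy.
  assert (G : is_glb leX (fun z => z = x \/ z = y) x).
  { split. - intros z [->| ->]; auto; destruct PX; auto.
    - intros u Hu. apply Hu; auto. }
  destruct (Hm _ _ G) as [G1 _]. apply G1. exists y; auto.
Qed.

Lemma psiop_hom_mono (D : Doctrine) (HD : join_doctrine D) {X Y} (leX : rel X) (leY : rel Y) f :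
  is_poset leX -> psiop_hom D leX leY f -> forall x y, leX x y -> leY (f x) (f y).
Proof.
  intros PX Hm x y Hxy.
  assert (G : is_glb leX (fun z => z = x \/ z = y) x).
  { split. - intros z [->| ->]; auto; destruct PX; auto.
    - intros u Hu. apply Hu; auto. }
  assert (I : inD D (opp leX) (fun z => z = x \/ z = y)).
  { apply (inD_top D HD _ _ x); auto using opp_poset.
    intros z [->| ->]; unfold opp; auto; destruct PX; auto. }
  destruct (Hm _ _ I G) as [G1 _]. apply G1. exists y; auto.
Qed.

Lemma compact_below (D : Doctrine) (HD : join_doctrine D) {T} (le : rel T) k S j :
  is_poset le -> compact D le k -> inD D le S -> is_lub le S j -> le k j -> exists s, S s /\ le k s.
Proof.
  intros P Hk HS [J1 J2] Hkj. apply (Hk (fun y => exists s, S s /\ le y s)).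
  - split.
    + intros x y Hxy [s [Ss Hs]]. exists s; split; auto. destruct P; eauto.
    + apply (inD_up D HD le S); auto.
      all: try (intros x Sx; exists x; split; auto; destruct P; auto; fail).
      all: try (intros x [s [Ss Hs]]; exists s; auto; fail).
  - exists j; split; auto. split.
    + intros y [s [Ss Hs]]. destruct P; eauto.
    + intros u Hu. apply J2. intros x Sx. apply Hu. exists x; split; auto; destruct P; auto.
Qed.

Lemma dwa_lower (D : Doctrine) {T} (le : rel T) x : lower le (dwa D le x).
Proof. intros y y' Hy H phi Hphi Hb. pose proof (H phi Hphi Hb). destruct Hphi as [L _]. exact (L _ _ Hy H0). Qed.

Lemma dwa_mono (D : Doctrine) {T} (le : rel T) x x' y : is_poset le -> le x x' -> dwa D le x y -> dwa D le x' y.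
Proof.
  intros P Hx H phi Hphi [j [Hj Hxj]]. apply H; auto. exists j; split; auto. destruct P; eauto.
Qed.

Lemma DX_full (D : Doctrine) (HD : join_doctrine D) {T} (le : rel T) S :
  is_poset le -> inD D le S -> DX D (sub_le le S) (fun _ => True).
Proof.
  intros P H. split.
  - intros x y _ _; auto.
  - apply inD_full; auto. apply sub_poset; auto.
Qed.

Section Main.
Variables Phi Psi : Doctrine.
Hypothesis JP : join_doctrine Phi.
Hypothesis JQ : join_doctrine Psi.
Hypothesis SD : sound_dual Phi Psi.

Lemma comm {X Y} (leX : rel X) (leY : rel Y) (phi : Y -> Prop) (psi : X -> Prop) (F : X -> Y -> bool) :
  is_poset leX -> is_poset leY -> DX Phi leY phi -> DX Psi leX psi ->
  (forall x x' y y', leX x' x -> leY y y' -> le2 (F x y) (F x' y')) ->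
  (forall x, psi x -> exists y, phi y /\ F x y = true) ->
  exists y, phi y /\ forall x, psi x -> F x y = true.
Proof. intros. apply (proj1 SD X leX Y leY); auto. Qed.

Section PartA.
Variables (X : Type) (leX : rel X).
Hypothesis HX : complete_lattice leX.

Let PX : is_poset leX := proj1 HX.
Let HomX := Hom (phi_hom Phi leX le2).
Let leH := leHom (phi_hom Phi leX le2).

Definition pmeetA (S : HomX -> Prop) (x : X) : bool := bP (forall h, S h -> proj1_sig h x = true).

Lemma pmeetA_hom S : inD Psi (opp leH) S -> phi_hom Phi leX le2 (pmeetA S).
Proof.
  intros HS. split.
  - intros S' m Hm. apply glb2_img. unfold pmeetA. rewrite bP_true. split.
    + intros H x Sx. apply bP_true. intros h Sh.
      destruct (proj2_sig h) as [hm hj]. specialize (hm S' m Hm). apply glb2_img in hm.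
      apply hm; [exact (H _ Sh) | exact Sx].
    + intros H h Sh. destruct (proj2_sig h) as [hm hj]. specialize (hm S' m Hm). apply glb2_img in hm.
      apply hm. intros x Sx. specialize (H x Sx). rewrite bP_true in H. exact (H _ Sh).
  - intros S' j HS' Hj. apply lub2_img. unfold pmeetA. rewrite bP_true. split.
    + intros H.
      destruct (comm (sub_le (opp leH) S) (sub_le leX S') (fun _ => True) (fun _ => True)
        (fun h s => proj1_sig (proj1_sig h) (proj1_sig s))) as [[s Ss] [_ Hs]].
      * apply sub_poset, opp_poset, leHom_poset.
      * apply sub_poset, PX.
      * apply DX_full; auto.
      * apply DX_full; auto. apply opp_poset, leHom_poset.
      * intros [h Sh] [h' Sh'] [y Sy] [y' Sy']; unfold sub_le, opp; simpl. intros Hh Hy Hhy.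
        apply Hh. destruct h as [h hh]; simpl in *. apply (phi_hom_mono Phi leX le2 h PX hh y y'); auto.
      * intros [h Sh] _. specialize (H h Sh). destruct (proj2_sig h) as [hm hj].
        specialize (hj S' j HS' Hj). apply lub2_img in hj. apply hj in H.
        destruct H as [x [Sx Hx]]. exists (exist _ x Sx); simpl; auto.
      * exists s; split; auto. apply bP_true. intros h Sh. exact (Hs (exist _ h Sh) I).
    + intros [x [Sx Hx]] h Sh. rewrite bP_true in Hx. specialize (Hx h Sh).
      destruct (proj2_sig h) as [hm hj].
      specialize (hj S' j HS' Hj). apply lub2_img in hj. apply hj. eauto.
Qed.

Lemma pmeetA_glb S (HS : inD Psi (opp leH) S) : is_glb leH S (exist _ (pmeetA S) (pmeetA_hom S HS)).
Proof.
  split.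
  - intros h Sh x; unfold le2, pmeetA; simpl. rewrite bP_true. auto.
  - intros u Hu x; unfold le2, pmeetA; simpl. rewrite bP_true. intros Hux h Sh. exact (Hu h Sh x Hux).
Qed.

Lemma glbA_pointwise S m : inD Psi (opp leH) S -> is_glb leH S m ->
  forall x, proj1_sig m x = true <-> forall h, S h -> proj1_sig h x = true.
Proof.
  intros HS Hm. rewrite (glb_unique leH S m _ (leHom_poset _) Hm (pmeetA_glb S HS)).
  intro x; simpl. unfold pmeetA. apply bP_true.
Qed.

Lemma partA : psiop_inf Psi leH.
Proof. split. apply leHom_poset. intros S HS. eexists. apply (pmeetA_glb S HS). Qed.

End PartA.

End Main.

Lemma bool_eq_iff (b c : bool) : (b = true <-> c = true) -> b = c.
Proof. destruct b, c; intuition; try discriminate; symmetry; auto. Qed.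

Section PartC.
Variables Phi Psi : Doctrine.
Hypothesis JP : join_doctrine Phi.
Hypothesis JQ : join_doctrine Psi.
Hypothesis SD : sound_dual Phi Psi.
Variables (A : Type) (leA : rel A).
Hypothesis HA : psiop_inf Psi leA.

Let PA : is_poset leA := proj1 HA.
Let HomA := Hom (psiop_hom Psi leA le2).
Let leHA := leHom (psiop_hom Psi leA le2).
Let PH : is_poset leHA := leHom_poset _.

Lemma homC_mono (h : HomA) x y : leA x y -> proj1_sig h x = true -> proj1_sig h y = true.
Proof. intros. apply (psiop_hom_mono Psi JQ leA le2 (proj1_sig h) PA (proj2_sig h) x y); auto. Qed.

Definition pmC (S : HomA -> Prop) (a : A) : bool := bP (forall h, S h -> proj1_sig h a = true).

Lemma pmC_hom S : psiop_hom Psi leA le2 (pmC S).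
Proof.
  intros T m HT Hm. apply glb2_img. unfold pmC. rewrite bP_true. split.
  - intros H x Tx. apply bP_true. intros h Sh.
    pose proof (proj2_sig h T m HT Hm) as hm. apply glb2_img in hm. apply hm; auto.
  - intros H h Sh. pose proof (proj2_sig h T m HT Hm) as hm. apply glb2_img in hm.
    apply hm. intros x Tx. specialize (H x Tx). rewrite bP_true in H. auto.
Qed.

Definition pmC_el S : HomA := exist _ (pmC S) (pmC_hom S).

Lemma pmC_glb S : is_glb leHA S (pmC_el S).
Proof.
  split.
  - intros h Sh x; unfold le2, pmC_el, pmC; simpl. rewrite bP_true. auto.
  - intros u Hu x; unfold le2, pmC_el, pmC; simpl. rewrite bP_true. intros Hux h Sh. exact (Hu h Sh x Hux).
Qed.

Lemma glbC_pointwise S m : is_glb leHA S m ->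
  forall x, proj1_sig m x = true <-> forall h, S h -> proj1_sig h x = true.
Proof.
  intros Hm. rewrite (glb_unique leHA S m _ PH Hm (pmC_glb S)).
  intro x; simpl. unfold pmC. apply bP_true.
Qed.

Lemma completeC : complete_lattice leHA.
Proof.
  split; auto. intros S. exists (pmC_el (fun u => forall h, S h -> leHA h u)). split.
  - intros h Sh x; unfold le2, pmC_el, pmC; simpl. rewrite bP_true. intros Hh u Hu. exact (Hu h Sh x Hh).
  - intros u Hu x; unfold le2, pmC_el, pmC; simpl. rewrite bP_true. intros H. apply H. exact Hu.
Qed.

Definition pjC (S : HomA -> Prop) (a : A) : bool := bP (exists h, S h /\ proj1_sig h a = true).

Lemma pjC_hom S : inD Phi leHA S -> psiop_hom Psi leA le2 (pjC S).
Proof.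
  intros HS T m HT Hm. apply glb2_img. unfold pjC. rewrite bP_true. split.
  - intros [h [Sh Hh]] x Tx. apply bP_true. exists h; split; auto.
    pose proof (proj2_sig h T m HT Hm) as hm. apply glb2_img in hm. apply hm; auto.
  - intros H.
    destruct (comm Phi Psi SD (sub_le (opp leA) T) (sub_le leHA S) (fun _ => True) (fun _ => True)
        (fun t h => proj1_sig (proj1_sig h) (proj1_sig t))) as [[h Sh] [_ Hh]].
    + apply sub_poset, opp_poset, PA.
    + apply sub_poset, PH.
    + apply DX_full; auto.
    + apply DX_full; auto. apply opp_poset, PA.
    + intros [t Tt] [t' Tt'] [h Sh] [h' Sh']; unfold sub_le, opp; simpl. intros Ht Hh Hth.
      apply Hh. apply (homC_mono h t t'); auto.
    + intros [t Tt] _. specialize (H t Tt). rewrite bP_true in H.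
      destruct H as [h [Sh Hh]]. exists (exist _ h Sh); simpl; auto.
    + exists h; split; auto. pose proof (proj2_sig h T m HT Hm) as hm. apply glb2_img in hm.
      apply hm. intros t Tt. exact (Hh (exist _ t Tt) I).
Qed.

Definition pjC_el S (HS : inD Phi leHA S) : HomA := exist _ (pjC S) (pjC_hom S HS).

Lemma pjC_lub S (HS : inD Phi leHA S) : is_lub leHA S (pjC_el S HS).
Proof.
  split.
  - intros h Sh x; unfold le2, pjC_el, pjC; simpl. rewrite bP_true. eauto.
  - intros u Hu x; unfold le2, pjC_el, pjC; simpl. rewrite bP_true. intros [h [Sh Hh]]. exact (Hu h Sh x Hh).
Qed.

Lemma lubC_pointwise S j : inD Phi leHA S -> is_lub leHA S j ->
  forall x, proj1_sig j x = true <-> exists h, S h /\ proj1_sig h x = true.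
Proof.
  intros HS Hj. rewrite (lub_unique leHA S j _ PH Hj (pjC_lub S HS)).
  intro x; simpl. unfold pjC. apply bP_true.
Qed.

Definition chiC (a : A) (x : A) : bool := bP (leA a x).

Lemma chiC_hom a : psiop_hom Psi leA le2 (chiC a).
Proof.
  intros T m HT [G1 G2]. apply glb2_img. unfold chiC. rewrite bP_true. split.
  - intros H x Tx. apply bP_true. destruct PA; eauto.
  - intros H. apply G2. intros x Tx. specialize (H x Tx). rewrite bP_true in H; auto.
Qed.

Definition chiC_el a : HomA := exist _ (chiC a) (chiC_hom a).

Lemma chiC_le a (h : HomA) : leHA (chiC_el a) h <-> proj1_sig h a = true.
Proof.
  split.
  - intros H. apply H. simpl. unfold chiC. apply bP_true. destruct PA; auto.
  - intros H x; unfold le2; simpl; unfold chiC; rewrite bP_true. intros. apply (homC_mono h a x); auto.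
Qed.

Lemma chiC_compact a : compact Phi leHA (chiC_el a).
Proof.
  intros phi [Lphi Iphi] [j [Hj Hle]].
  assert (ja : proj1_sig j a = true) by (apply chiC_le; auto).
  apply (lubC_pointwise phi j Iphi Hj) in ja. destruct ja as [h [ph ha]].
  apply (Lphi _ h); auto. apply chiC_le; auto.
Qed.

Definition gL (L : A -> Prop) : HomA := pmC_el (fun h => forall a, L a -> proj1_sig h a = true).

Lemma gL_true L x : proj1_sig (gL L) x = true <-> forall h : HomA, (forall a, L a -> proj1_sig h a = true) -> proj1_sig h x = true.
Proof. simpl. unfold pmC. apply bP_true. Qed.

Lemma gL_psi L : inD Psi (opp leA) L -> exists m, is_glb leA L m /\ gL L = chiC_el m.
Proof.
  intros HL. destruct (proj2 HA L HL) as [m Hm]. exists m; split; auto.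
  apply Hom_eq. intro x. apply bool_eq_iff. rewrite gL_true. simpl; unfold chiC; rewrite bP_true. split.
  - intros H. specialize (H (chiC_el m)). simpl in H. unfold chiC in H. rewrite bP_true in H.
    apply H. intros a La. apply bP_true. apply Hm; auto.
  - intros Hmx h Hh. pose proof (proj2_sig h L m HL Hm) as hm. apply glb2_img in hm.
    apply (homC_mono h m x); auto. apply hm; auto.
Qed.

Lemma gL_mono L L' : incl L L' -> leHA (gL L) (gL L').
Proof.
  intros H x. unfold le2. rewrite !gL_true. intros G h Hh. apply G. intros a La; auto.
Qed.

Lemma gL_union (AA : (A -> Prop) -> Prop) :
  is_lub leHA (img gL AA) (gL (fun x => exists L, AA L /\ L x)).
Proof.
  split.
  - intros c [L [AL <-]]. apply gL_mono. intros x Lx; eauto.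
  - intros u Hu x. unfold le2. rewrite gL_true. intros H. apply H.
    intros a [L [AL La]]. apply (Hu (gL L)). { exists L; auto. }
    apply gL_true. auto.
Qed.

Lemma gL_self (h : HomA) : gL (fun a => proj1_sig h a = true) = h.
Proof.
  apply Hom_eq. intro x. apply bool_eq_iff. rewrite gL_true. split; auto.
Qed.

Lemma lower_h (h : HomA) : lower (opp leA) (fun a => proj1_sig h a = true).
Proof. intros x y Hxy Hy. apply (homC_mono h y x); auto. Qed.

Lemma partC : phi_algebraic Phi leHA.
Proof.
  split. apply completeC.
  intros C HK HC h. rewrite <- gL_self.
  apply (proj2 SD A (opp leA) (opp_poset _ PA) (fun L => C (gL L))).
  - intros L [_ HL]. destruct (gL_psi L HL) as [m [_ ->]]. apply HK, chiC_compact.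
  - intros AA HAA HI. apply (HC (img gL AA)).
    + apply (inD_map Phi JP (@incl A) AA leHA gL); auto using incl_poset.
      * intros x y _ _; apply gL_mono.
      * intros x Ax; exists x; auto.
      * intros q [L [AL <-]]. exists L; split; auto. destruct PH; auto.
    + intros c [L [AL <-]]. apply HAA; auto.
    + apply gL_union.
  - apply lower_h.
Qed.

Lemma compactC_chi c : compact Phi leHA c -> exists a, forall x, proj1_sig c x = true <-> leA a x.
Proof.
  intros Hc.
  assert (K : forall L, lower (opp leA) L -> leHA c (gL L) -> exists a, leHA c (chiC_el a) /\ leHA (chiC_el a) (gL L)).
  { intros L0 HL0.
    apply (proj2 SD A (opp leA) (opp_poset _ PA) (fun L => leHA c (gL L) -> exists a, leHA c (chiC_el a) /\ leHA (chiC_el a) (gL L))); auto.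
    - intros L [_ HL] Hle. destruct (gL_psi L HL) as [m [_ E]]. rewrite E in *. exists m; split; auto. destruct PH; auto.
    - intros AA HAA HI Hle.
      destruct (compact_below Phi JP leHA c (img gL AA) (gL (fun x => exists L, AA L /\ L x)) PH Hc) with (2 := gL_union AA) as [s [[L [AL <-]] Hs]]; auto.
      + apply (inD_map Phi JP (@incl A) AA leHA gL); auto using incl_poset.
        * intros x y _ _; apply gL_mono.
        * intros x Ax; exists x; auto.
        * intros q [L [AL <-]]. exists L; split; auto. destruct PH; auto.
      + destruct (proj2 (HAA L AL) Hs) as [a [H1 H2]]. exists a; split; auto.
        destruct PH as [_ Tr _]. apply (Tr _ _ _ H2). apply gL_mono. intros x Lx; eauto. }
  destruct (K _ (lower_h c)) as [a [H1 H2]].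
  { rewrite gL_self. destruct PH; auto. }
  rewrite gL_self in H2. exists a. intro x. split.
  - intro cx. specialize (H1 x cx). simpl in H1. unfold chiC in H1. rewrite bP_true in H1; auto.
  - intro ax. apply H2. simpl. unfold chiC. apply bP_true; auto.
Qed.

End PartC.

Lemma cl_glb {T} (le : rel T) : complete_lattice le -> forall S, exists m, is_glb le S m.
Proof.
  intros [P H] S. destruct (H (fun u => forall x, S x -> le u x)) as [m [M1 M2]].
  exists m; split.
  - intros x Sx. apply M2. intros u Hu; auto.
  - intros u Hu. apply M1; auto.
Qed.

Definition sup {T} (le : rel T) (H : complete_lattice le) (S : T -> Prop) : T :=
  proj1_sig (constructive_indefinite_description _ (proj2 H S)).
Lemma sup_spec {T} (le : rel T) H S : is_lub le S (sup le H S).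
Proof. unfold sup. exact (proj2_sig (constructive_indefinite_description _ (proj2 H S))). Qed.



Section PartE.
Variables Phi Psi : Doctrine.
Hypothesis JP : join_doctrine Phi.
Hypothesis JQ : join_doctrine Psi.
Hypothesis SD : sound_dual Phi Psi.
Variables (X : Type) (leX : rel X).
Hypothesis HX : phi_algebraic Phi leX.

Let CX : complete_lattice leX := proj1 HX.
Let PX : is_poset leX := proj1 CX.
Let HomX := Hom (phi_hom Phi leX le2).
Let leH := leHom (phi_hom Phi leX le2).
Let PH : is_poset leH := leHom_poset _.

Definition chiE (k x : X) : bool := bP (leX k x).

Lemma chiE_hom k : compact Phi leX k -> phi_hom Phi leX le2 (chiE k).
Proof.
  intros Hk. split.
  - intros S m [G1 G2]. apply glb2_img. unfold chiE. rewrite bP_true. split.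
    + intros H x Sx. apply bP_true. pose proof PX as [? ? ?]; eauto.
    + intros H. apply G2. intros x Sx. specialize (H x Sx). rewrite bP_true in H; auto.
  - intros S j HS Hj. apply lub2_img. unfold chiE. rewrite bP_true. split.
    + intros H. destruct (compact_below Phi JP leX k S j PX Hk HS Hj H) as [s [Ss Hs]].
      exists s; split; auto. apply bP_true; auto.
    + intros [s [Ss Hs]]. rewrite bP_true in Hs. pose proof PX as [_ Tr _]. apply (Tr _ _ _ Hs). apply Hj; auto.
Qed.

Lemma homE_mono (h : HomX) x y : leX x y -> proj1_sig h x = true -> proj1_sig h y = true.
Proof. intros. apply (phi_hom_mono Phi leX le2 (proj1_sig h) PX (proj2_sig h) x y); auto. Qed.

Lemma hom_chi (h : HomX) : exists k, compact Phi leX k /\ forall x, proj1_sig h x = true <-> leX k x.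
Proof.
  destruct (cl_glb leX CX (fun x => proj1_sig h x = true)) as [m Hm].
  assert (hm : proj1_sig h m = true).
  { pose proof (proj1 (proj2_sig h) _ _ Hm) as G. apply glb2_img in G. apply G; auto. }
  exists m; split.
  - intros phi [Lphi Iphi] [j [Hj Hmj]].
    assert (hj : proj1_sig h j = true) by (apply (homE_mono h m j); auto).
    pose proof (proj2 (proj2_sig h) _ _ Iphi Hj) as G. apply lub2_img in G. apply G in hj.
    destruct hj as [y [py hy]]. apply (Lphi m y); auto. apply Hm; auto.
  - intros x; split.
    + intros hx. apply Hm; auto.
    + intros Hmx. apply (homE_mono h m x); auto.
Qed.

Lemma alg_join x : is_lub leX (fun k => compact Phi leX k /\ leX k x) x.
Proof.
  apply (proj2 HX (fun x => is_lub leX (fun k => compact Phi leX k /\ leX k x) x)).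
  - intros k Hk. split.
    + intros y [_ H]; auto.
    + intros u Hu. apply Hu. split; auto. pose proof PX as [? ? ?]; auto.
  - intros S j HS HC Hj. split.
    + intros y [_ H]; auto.
    + intros u Hu. apply Hj. intros s Ss. apply (HC s Ss). intros k [Hk Hks]. apply Hu. split; auto.
      pose proof PX as [_ Tr _]. apply (Tr _ _ _ Hks). apply Hj; auto.
Qed.

Definition chiE_el k (Hk : compact Phi leX k) : HomX := exist _ (chiE k) (chiE_hom k Hk).

Lemma embedE x y : leX x y <-> forall h : HomX, proj1_sig h x = true -> proj1_sig h y = true.
Proof.
  split.
  - intros; apply (homE_mono h x y); auto.
  - intros H. apply (alg_join x). intros k [Hk Hkx].
    specialize (H (chiE_el k Hk)). simpl in H. unfold chiE in H. rewrite !bP_true in H. auto.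
Qed.

Lemma Hev x : psiop_hom Psi leH le2 (fun h : HomX => proj1_sig h x).
Proof.
  intros S m HS Hm. apply glb2_img. apply (glbA_pointwise Phi Psi JP JQ SD X leX CX S m HS Hm).
Qed.

Let HomH := Hom (psiop_hom Psi leH le2).
Let leHH := leHom (psiop_hom Psi leH le2).

Definition evE (x : X) : HomH := exist _ (fun h : HomX => proj1_sig h x) (Hev x).

Lemma evE_embed x y : leX x y <-> leHH (evE x) (evE y).
Proof. rewrite embedE. unfold leHH, leHom, le2; simpl. tauto. Qed.

Let Kt := {k : X | compact Phi leX k}.
Let leK := sub_le leX (compact Phi leX).
Let PK : is_poset leK := sub_poset _ _ PX.
Definition chiK (k : Kt) : HomX := chiE_el (proj1_sig k) (proj2_sig k).

Lemma chiK_anti k k' : leK k k' -> opp leH (chiK k) (chiK k').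
Proof.
  intros H x; unfold le2; simpl; unfold chiE; rewrite !bP_true. intros. pose proof PX as [? ? ?]; eauto.
Qed.

Lemma comp_join (L : Kt -> Prop) j : DX Psi leK L -> is_lub leX (img (@proj1_sig _ _) L) j -> compact Phi leX j.
Proof.
  intros HL Hj phi Hphi [j2 [Hj2 Hjj2]].
  destruct (comm Phi Psi SD leK leX phi L (fun l y => bP (leX (proj1_sig l) y))) as [y [py Hy]]; auto.
  - intros l l' y y' Hl Hy; unfold le2; rewrite !bP_true. intros. pose proof PX as [_ Tr _]. eauto.
  - intros l Ll. exists (proj1_sig l). split.
    + apply (proj2_sig l); auto. exists j2; split; auto.
      pose proof PX as [_ Tr _]. apply (Tr _ j); auto. apply Hj. exists l; auto.
    + apply bP_true. pose proof PX as [? ? ?]; auto.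
  - destruct Hphi as [Lp _]. apply (Lp j y); auto. apply Hj. intros c [l [Ll <-]].
    specialize (Hy l Ll). rewrite bP_true in Hy; auto.
Qed.

Lemma evE_surj (H : HomH) : exists x, evE x = H.
Proof.
  set (L := fun k : Kt => proj1_sig H (chiK k) = true).
  assert (Hmono : forall h h' : HomX, leH h h' -> proj1_sig H h = true -> proj1_sig H h' = true).
  { intros h h' Hh. apply (psiop_hom_mono Psi JQ leH le2 (proj1_sig H) PH (proj2_sig H)); auto. }
  assert (Llow : lower leK L).
  { intros k k' Hk Hk'. unfold L in *. apply (Hmono (chiK k')); auto. apply chiK_anti; auto. }
  set (x := sup leX CX (img (@proj1_sig _ _) L)).
  assert (Key : forall k : Kt, leX (proj1_sig k) x -> L k).
  { assert (G : forall L0, lower leK L0 -> (forall k, L0 k -> L k) -> forall j, is_lub leX (img (@proj1_sig _ _) L0) j ->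
                 forall k : Kt, leX (proj1_sig k) j -> L k).
    { intros L0 HL0.
      apply (proj2 SD Kt leK PK (fun L0 => (forall k, L0 k -> L k) -> forall j, is_lub leX (img (@proj1_sig _ _) L0) j ->
                 forall k : Kt, leX (proj1_sig k) j -> L k)); auto.
      - intros L1 HL1 Sub j Hj k Hk.
        assert (cj : compact Phi leX j) by (apply (comp_join L1); auto).
        apply (Llow k (exist _ j cj)); auto.
        unfold L. 
        assert (Fam : inD Psi (opp leH) (img chiK L1)).
        { apply (inD_map Psi JQ leK L1 (opp leH) chiK); auto using opp_poset.
          - intros a b _ _ Hab. apply chiK_anti; auto.
          - intros a La; exists a; auto.
          - intros q [a [La <-]]. exists a; split; auto. unfold opp; pose proof PH as [? ? ?]; auto.
          - apply HL1. }
        assert (Gl : is_glb leH (img chiK L1) (chiK (exist _ j cj))).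
        { split.
          - intros c [l [Ll <-]] z; unfold le2; simpl; unfold chiE; rewrite !bP_true. intros.
            pose proof PX as [_ Tr _]. apply (Tr _ j); auto. apply Hj. exists l; auto.
          - intros g Hg z. destruct (hom_chi g) as [b [Hb Eb]]. unfold le2; simpl; unfold chiE. rewrite bP_true.
            intros gz. apply Eb in gz. pose proof PX as [_ Tr _]. apply (Tr _ b); auto. apply Hj.
            intros c [l [Ll <-]]. specialize (Hg (chiK l) (ex_intro _ l (conj Ll eq_refl)) b).
            unfold le2 in Hg; simpl in Hg; unfold chiE in Hg. rewrite bP_true in Hg. apply Hg. apply Eb.
            pose proof PX as [? ? ?]; auto. }
        pose proof (proj2_sig H _ _ Fam Gl) as G. apply glb2_img in G. apply G.
        intros c [l [Ll <-]]. apply Sub; auto.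
      - intros AA HAA HI Sub j Hj k Hk.
        set (sA := fun A0 : Kt -> Prop => sup leX CX (img (@proj1_sig _ _) A0)).
        assert (Jl : is_lub leX (img sA AA) j).
        { split.
          - intros c [A0 [AA0 <-]]. apply (sup_spec leX CX). intros c [a [Aa <-]]. apply Hj.
            exists a; split; auto. exists A0; auto.
          - intros u Hu. apply Hj. intros c [a [[A0 [AA0 Aa]] <-]].
            pose proof PX as [_ Tr _]. apply (Tr _ (sA A0)). apply (sup_spec leX CX). exists a; auto.
            apply Hu. exists A0; auto. }
        assert (IJ : inD Phi leX (img sA AA)).
        { apply (inD_map Phi JP (@incl Kt) AA leX sA); auto using incl_poset.
          - intros a b _ _ Hab. apply (sup_spec leX CX). intros c [l [Ll <-]].
            apply (sup_spec leX CX). exists l; auto.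
          - intros a Aa; exists a; auto.
          - intros q [a [Aa <-]]. exists a; split; auto. pose proof PX as [? ? ?]; auto. }
        destruct (compact_below Phi JP leX (proj1_sig k) _ j PX (proj2_sig k) IJ Jl Hk) as [s [[A0 [AA0 <-]] Hs]].
        apply (proj2 (HAA A0 AA0)) with (sA A0); auto.
        + intros a Aa. apply Sub. exists A0; auto.
        + apply sup_spec. }
    intros k Hk. apply (G L Llow (fun k H => H) x (sup_spec leX CX _) k Hk). }
  exists x. apply Hom_eq. intros h. simpl.
  destruct (hom_chi h) as [k0 [Hk0 E0]].
  assert (hE : h = chiK (exist _ k0 Hk0)).
  { apply Hom_eq. intro z. simpl. unfold chiE. apply bool_eq_iff. rewrite bP_true. apply E0. }
  apply bool_eq_iff. rewrite hE. simpl. unfold chiE. rewrite bP_true. split.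
  - intros Hx. exact (Key (exist _ k0 Hk0) Hx).
  - intros Lk. apply (sup_spec leX CX). exists (exist _ k0 Hk0). split; auto.
Qed.

End PartE.

Lemma img_comp {X Y Z} (f : X -> Y) (g : Y -> Z) S : img g (img f S) = img (fun x => g (f x)) S.
Proof.
  apply functional_extensionality; intro z. apply propositional_extensionality. unfold img; split.
  - intros [y [[x [Sx <-]] <-]]. eauto.
  - intros [x [Sx <-]]. eauto.
Qed.

Lemma iso_phi_hom (D : Doctrine) {X Y} (leX : rel X) (leY : rel Y) (f : X -> Y) (g : Y -> X) :
  (forall y, f (g y) = y) -> (forall x x', leX x x' <-> leY (f x) (f x')) -> phi_hom D leX leY f.
Proof. intros; split; intros; [eapply iso_glb | eapply iso_lub]; eauto. Qed.

Lemma iso_psiop_hom (D : Doctrine) {X Y} (leX : rel X) (leY : rel Y) (f : X -> Y) (g : Y -> X) :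
  (forall y, f (g y) = y) -> (forall x x', leX x x' <-> leY (f x) (f x')) -> psiop_hom D leX leY f.
Proof. intros; intros S m _ Hm; eapply iso_glb; eauto. Qed.

Lemma iso_generic (H : forall X Y : Type, rel X -> rel Y -> (X -> Y) -> Prop) {X Y} (leX : rel X) (leY : rel Y) (f : X -> Y) :
  is_poset leX -> (forall x x', leX x x' <-> leY (f x) (f x')) -> (forall y, exists x, f x = y) ->
  (forall X Y (leX : rel X) (leY : rel Y) (f : X -> Y) (g : Y -> X),
      (forall y, f (g y) = y) -> (forall x x', leX x x' <-> leY (f x) (f x')) -> H X Y leX leY f) ->
  is_iso H leX leY f.
Proof.
  intros PX E S Gen.
  set (g := fun y => proj1_sig (constructive_indefinite_description _ (S y))).
  assert (fg : forall y, f (g y) = y) by (intro y; unfold g; exact (proj2_sig (constructive_indefinite_description _ (S y)))).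
  assert (gf : forall x, g (f x) = x).
  { intro x. destruct PX as [R _ A]. apply A; apply E; rewrite fg; apply E; auto. }
  split.
  - apply (Gen _ _ _ _ f g); auto.
  - exists g; split; [|split]; auto. apply (Gen _ _ _ _ g f); auto.
    intros y y'. rewrite E, !fg. tauto.
Qed.

Section Rest.
Variables Phi Psi : Doctrine.
Hypothesis JP : join_doctrine Phi.
Hypothesis JQ : join_doctrine Psi.
Hypothesis SD : sound_dual Phi Psi.

Lemma unit_iso (X : Type) (leX : rel X) : phi_algebraic Phi leX ->
     exists Hev : (forall x : X,
                     psiop_hom Psi (leHom (phi_hom Phi leX le2)) le2
                       (fun h => proj1_sig h x)),
       is_iso (@phi_hom Phi) leX
         (leHom (psiop_hom Psi (leHom (phi_hom Phi leX le2)) le2))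
         (fun x => exist _ (fun h => proj1_sig h x) (Hev x)).
Proof.
  intros HX. exists (Hev Phi Psi JP JQ SD X leX HX).
  apply iso_generic.
  - exact (proj1 (proj1 HX)).
  - apply (evE_embed Phi Psi JP JQ SD X leX HX).
  - apply (evE_surj Phi Psi JP JQ SD X leX HX).
  - intros. eapply iso_phi_hom; eauto.
Qed.

Lemma counit_iso (A : Type) (leA : rel A) : psiop_inf Psi leA ->
     exists Hev : (forall a : A,
                     phi_hom Phi (leHom (psiop_hom Psi leA le2)) le2
                       (fun h => proj1_sig h a)),
       is_iso (@psiop_hom Psi) leA
         (leHom (phi_hom Phi (leHom (psiop_hom Psi leA le2)) le2))
         (fun a => exist _ (fun h => proj1_sig h a) (Hev a)).
Proof.
  intros HA.
  assert (Hev : forall a : A, phi_hom Phi (leHom (psiop_hom Psi leA le2)) le2 (fun h => proj1_sig h a)).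
  { intro a. split.
    - intros S m Hm. apply glb2_img. apply (glbC_pointwise Psi A leA S m Hm).
    - intros S j HS Hj. apply lub2_img. apply (lubC_pointwise Phi Psi JP JQ SD A leA HA S j HS Hj). }
  exists Hev. apply iso_generic.
  - exact (proj1 HA).
  - intros a b. unfold leHom, le2; simpl. split.
    + intros Hab h. apply (homC_mono Psi JQ A leA HA h a b Hab).
    + intros H. specialize (H (chiC_el Psi A leA HA a)). simpl in H. unfold chiC in H.
      rewrite !bP_true in H. apply H. destruct (proj1 HA); auto.
  - intros G.
    destruct (hom_chi Phi _ _ (partC Phi Psi JP JQ SD A leA HA) G) as [c [Hc Ec]].
    destruct (compactC_chi Phi Psi JP JQ SD A leA HA c Hc) as [a Ea].
    exists a. apply Hom_eq. intro h. simpl. apply bool_eq_iff. rewrite Ec. split.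
    + intros ha x; unfold le2. rewrite Ea. intros. apply (homC_mono Psi JQ A leA HA h a x); auto.
    + intros Hh. apply Hh. apply Ea. destruct (proj1 HA); auto.
  - intros. eapply iso_psiop_hom; eauto.
Qed.

Lemma phi_hom_comp {X Y Z} (leX : rel X) (leY : rel Y) (leZ : rel Z) f g :
  is_poset leX -> is_poset leY -> phi_hom Phi leX leY f -> phi_hom Phi leY leZ g ->
  phi_hom Phi leX leZ (fun x => g (f x)).
Proof.
  intros PX PY Hf Hg. split.
  - intros S m Hm. rewrite <- img_comp. apply Hg, Hf, Hm.
  - intros S j HS Hj. rewrite <- img_comp. apply Hg.
    + apply (inD_map Phi JP leX S leY f); auto.
      * intros x y _ _; apply (phi_hom_mono Phi leX leY f PX Hf).
      * intros x Sx; exists x; auto.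
      * intros q [x [Sx <-]]. exists x; split; auto. destruct PY; auto.
    + apply Hf; auto.
Qed.

Lemma psiop_hom_comp {X Y Z} (leX : rel X) (leY : rel Y) (leZ : rel Z) f g :
  is_poset leX -> is_poset leY -> psiop_hom Psi leX leY f -> psiop_hom Psi leY leZ g ->
  psiop_hom Psi leX leZ (fun x => g (f x)).
Proof.
  intros PX PY Hf Hg S m HS Hm. rewrite <- img_comp. apply Hg.
  - apply (inD_map Psi JQ (opp leX) S (opp leY) f); auto using opp_poset.
    + intros x y _ _; unfold opp; intros; apply (psiop_hom_mono Psi JQ leX leY f PX Hf); auto.
    + intros x Sx; exists x; auto.
    + intros q [x [Sx <-]]. exists x; split; auto. unfold opp; destruct PY; auto.
  - apply Hf; auto.
Qed.

Lemma morphB (X : Type) (leX : rel X) (Y : Type) (leY : rel Y) (f : X -> Y) :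
     phi_algebraic Phi leX -> phi_algebraic Phi leY -> phi_hom Phi leX leY f ->
     exists Hc : (forall h : Hom (phi_hom Phi leY le2),
                    phi_hom Phi leX le2 (fun x => proj1_sig h (f x))),
       psiop_hom Psi (leHom (phi_hom Phi leY le2)) (leHom (phi_hom Phi leX le2))
         (fun h => exist _ (fun x => proj1_sig h (f x)) (Hc h)).
Proof.
  intros HX HY Hf.
  assert (Hc : forall h : Hom (phi_hom Phi leY le2), phi_hom Phi leX le2 (fun x => proj1_sig h (f x))).
  { intro h. apply (phi_hom_comp leX leY le2 f (proj1_sig h)); auto.
    exact (proj1 (proj1 HX)). exact (proj1 (proj1 HY)). exact (proj2_sig h). }
  exists Hc. intros S m HS Hm.
  pose proof (glbA_pointwise Phi Psi JP JQ SD Y leY (proj1 HY) S m HS Hm) as E.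
  split.
  - intros c [h [Sh <-]] x; unfold le2; simpl. rewrite E. auto.
  - intros u Hu x; unfold le2; simpl. rewrite E. intros ux h Sh.
    exact (Hu _ (ex_intro _ h (conj Sh eq_refl)) x ux).
Qed.

Lemma morphD (A : Type) (leA : rel A) (B : Type) (leB : rel B) (g : A -> B) :
     psiop_inf Psi leA -> psiop_inf Psi leB -> psiop_hom Psi leA leB g ->
     exists Hc : (forall h : Hom (psiop_hom Psi leB le2),
                    psiop_hom Psi leA le2 (fun a => proj1_sig h (g a))),
       phi_hom Phi (leHom (psiop_hom Psi leB le2)) (leHom (psiop_hom Psi leA le2))
         (fun h => exist _ (fun a => proj1_sig h (g a)) (Hc h)).
Proof.
  intros HA HB Hg.
  assert (Hc : forall h : Hom (psiop_hom Psi leB le2), psiop_hom Psi leA le2 (fun a => proj1_sig h (g a))).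
  { intro h. apply (psiop_hom_comp leA leB le2 g (proj1_sig h)); auto.
    exact (proj1 HA). exact (proj1 HB). exact (proj2_sig h). }
  exists Hc. split.
  - intros S m Hm. pose proof (glbC_pointwise Psi B leB S m Hm) as E. split.
    + intros c [h [Sh <-]] x; unfold le2; simpl. rewrite E. auto.
    + intros u Hu x; unfold le2; simpl. rewrite E. intros ux h Sh.
      exact (Hu _ (ex_intro _ h (conj Sh eq_refl)) x ux).
  - intros S j HS Hj. pose proof (lubC_pointwise Phi Psi JP JQ SD B leB HB S j HS Hj) as E. split.
    + intros c [h [Sh <-]] x; unfold le2; simpl. rewrite E. eauto.
    + intros u Hu x; unfold le2; simpl. rewrite E. intros [h [Sh hx]].
      exact (Hu _ (ex_intro _ h (conj Sh eq_refl)) x hx).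
Qed.

End Rest.

Section Omega.
Variables Phi Psi : Doctrine.
Hypothesis JP : join_doctrine Phi.
Hypothesis JQ : join_doctrine Psi.
Hypothesis SD : sound_dual Phi Psi.

Lemma omega_psi : ~ Phi nat Peano.le -> Psi nat Peano.le.
Proof.
  intros Hn.
  cut ((forall n : nat, True) -> Psi nat Peano.le); [intros H; apply H; auto|].
  apply (proj2 SD nat Peano.le nat_poset (fun L => (forall n, L n) -> Psi nat Peano.le)).
  - intros L [_ HL] Hf. apply (inD_full_inv Psi JQ _ nat_poset).
    apply (inD_ext Psi JQ _ L); auto using nat_poset. intuition.
  - intros AA HAA HI Hf.
    destruct (classic (exists A, AA A /\ forall n, A n)) as [[A [AA0 HA0]]|N].
    { apply (proj2 (HAA A AA0)); auto. }
    exfalso. apply Hn.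
    assert (Ex : forall a : {A | AA A}, exists n, ~ proj1_sig a n /\ forall m, ~ proj1_sig a m -> n <= m).
    { intros [A AA0]. simpl. apply least_exists. apply NNPP; intro M. apply N. exists A; split; auto.
      intro n. apply NNPP; intro M'. apply M; eauto. }
    set (f := fun a => proj1_sig (constructive_indefinite_description _ (Ex a))).
    assert (Hf1 : forall a, ~ proj1_sig a (f a)) by (intro a; exact (proj1 (proj2_sig (constructive_indefinite_description _ (Ex a))))).
    assert (Hf2 : forall a m, ~ proj1_sig a m -> f a <= m) by (intro a; exact (proj2 (proj2_sig (constructive_indefinite_description _ (Ex a))))).
    apply (D_map Phi JP (sub_le (@incl nat) AA) Peano.le f).
    + apply sub_poset, incl_poset.
    + apply nat_poset.
    + intros a b Hab. apply Hf2. intro Hb. apply (Hf1 b). exact (Hab _ Hb).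
    + intros q. destruct (Hf q) as [A [AA0 Aq]]. exists (exist _ A AA0).
      destruct (le_lt_dec q (f (exist _ A AA0))) as [|Hlt]; auto.
      exfalso. apply (Hf1 (exist _ A AA0)). simpl. apply (proj1 (HAA A AA0) _ q); auto. lia.
    + exact HI.
  - intros x y _ _; auto.
Qed.

Lemma omega_not_both : Psi nat Peano.le -> Phi nat Peano.le -> False.
Proof.
  intros HQ HP.
  destruct (comm Phi Psi SD Peano.le Peano.le (fun _ => True) (fun _ => True) Nat.leb) as [y [_ Hy]];
    auto using nat_poset.
  - split; [intros x y _ _; auto| apply inD_full; auto using nat_poset].
  - split; [intros x y _ _; auto| apply inD_full; auto using nat_poset].
  - intros x x' y y' H1 H2; unfold le2; rewrite !Nat.leb_le; lia.
  - intros x _; exists x; split; auto. apply Nat.leb_le; auto.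
  - specialize (Hy (S y) I). apply Nat.leb_le in Hy. lia.
Qed.

Lemma alg_cts {X} (leX : rel X) : phi_algebraic Phi leX -> phi_continuous Phi leX.
Proof.
  intros HX. pose proof (proj1 (proj1 HX)) as PX. split; [exact (proj1 HX)|].
  set (ph := fun x y => exists k, compact Phi leX k /\ leX k x /\ leX y k).
  assert (ph_mono : forall x x', leX x x' -> incl (ph x) (ph x')).
  { intros x x' H y [k [Hk [H1 H2]]]. exists k; split; auto. split; auto. destruct PX; eauto. }
  intros x. exists (ph x). split; [split|split].
  - intros y y' Hy [k [Hk [H1 H2]]]. exists k; split; auto. split; auto. destruct PX; eauto.
  - apply (proj2 HX (fun x => inD Phi leX (ph x))).
    + intros k Hk. apply (inD_top Phi JP _ _ k PX).
      * exists k; split; auto. destruct PX; auto.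
      * intros y [k' [_ [H1 H2]]]. destruct PX; eauto.
    + intros S j HS HC Hj.
      apply (inD_ext Phi JP _ (fun y => exists A, img ph S A /\ A y)); auto.
      * apply inD_union; auto.
        -- intros A [s [Ss <-]]; auto.
        -- apply (inD_map Phi JP leX S (@incl X) ph); auto using incl_poset.
           all: try (intros a b _ _ Hab; apply ph_mono; auto; fail).
           all: try (intros a Sa; exists a; auto; fail).
           all: try (intros q [s [Ss <-]]; exists s; split; auto; intros z; auto; fail).
      * intros y; split.
        -- intros [A [[s [Ss <-]] Hy]]. apply (ph_mono s j); auto. apply Hj; auto.
        -- intros [k [Hk [H1 H2]]].
           destruct (compact_below Phi JP leX k S j PX Hk HS Hj H1) as [s [Ss Hs]].
           exists (ph s); split; [exists s; auto|]. exists k; auto.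
  - intros y [k [Hk [H1 H2]]] psi Hpsi [j [Hj Hxj]].
    apply (proj1 Hpsi y k H2). apply Hk; auto. exists j; split; auto. destruct PX; eauto.
  - destruct (proj2 (proj1 HX) (ph x)) as [j Hj]. exists j; split; auto.
    apply (alg_join Phi X leX HX x). intros k [Hk Hkx]. apply Hj. exists k; split; auto. split; auto.
    destruct PX; auto.
Qed.

Section CtsAlg.
Hypothesis HPsi : Psi nat Peano.le.
Variables (X : Type) (leX : rel X).
Hypothesis HC : phi_continuous Phi leX.
Let CX := proj1 HC.
Let PX : is_poset leX := proj1 CX.

Lemma d0 x y : dwa Phi leX x y -> leX y x.
Proof.
  intros H. apply (H (fun z => leX z x)).
  - split.
    + intros a b Hab Hb. destruct PX; eauto.
    + apply (inD_top Phi JP _ _ x PX); auto. destruct PX; auto.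
  - exists x; split; [split|]; auto.
    + intros u Hu. apply Hu. destruct PX; auto.
    + destruct PX; auto.
Qed.

Lemma d2 z : DX Phi leX (dwa Phi leX z) /\ below_join leX (dwa Phi leX z) z.
Proof.
  destruct (proj2 HC z) as [phi [Hphi [Hsub Hb]]].
  assert (E : phi = dwa Phi leX z).
  { apply functional_extensionality; intro y; apply propositional_extensionality; split; auto.
    intros H. apply H; auto. }
  subst; auto.
Qed.

Lemma d3 x y : dwa Phi leX x y -> exists z, dwa Phi leX z y /\ dwa Phi leX x z.
Proof.
  intros Hy.
  set (W := fun w => exists A, img (dwa Phi leX) (dwa Phi leX x) A /\ A w).
  assert (HW : DX Phi leX W).
  { split.
    - intros a b Hab [A [[z [Hz <-]] Hb]]. exists (dwa Phi leX z); split; [exists z; auto|].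
      apply (dwa_lower Phi leX z a b); auto.
    - apply inD_union; auto.
      + intros A [z [_ <-]]. apply (proj2 (proj1 (d2 z))).
      + apply (inD_map Phi JP leX (dwa Phi leX x) (@incl X) (dwa Phi leX)); auto using incl_poset.
        all: try (intros a b _ _ Hab w; apply (dwa_mono Phi leX a b w PX Hab); fail).
        all: try (intros a Ha; exists a; auto; fail).
        all: try (intros q [z [Hz <-]]; exists z; split; auto; intros w; auto; fail).
        all: try (apply (proj2 (proj1 (d2 x)))). }
  assert (HbW : below_join leX W x).
  { destruct (proj2 CX W) as [j Hj]. exists j; split; auto.
    destruct (proj2 (d2 x)) as [jx [Hjx Hxjx]]. destruct PX as [_ Tr _]. apply (Tr _ jx); auto.
    apply Hjx. intros z Hz. destruct (proj2 (d2 z)) as [jz [Hjz Hzjz]].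
    apply (Tr _ jz); auto. apply Hjz. intros w Hw. apply Hj. exists (dwa Phi leX z); split; auto.
    exists z; auto. }
  destruct (Hy W HW HbW) as [A [[z [Hz <-]] Hyz]]. exists z; auto.
Qed.

Lemma d4 x y : dwa Phi leX x y -> exists k, compact Phi leX k /\ leX y k /\ leX k x.
Proof.
  intros Hy.
  set (P := {z | dwa Phi leX x z}).
  set (nxt := fun p : P => constructive_indefinite_description _ (d3 x (proj1_sig p) (proj2_sig p))).
  set (step := fun p : P => exist (fun z => dwa Phi leX x z) (proj1_sig (nxt p)) (proj2 (proj2_sig (nxt p))) : P).
  set (s := fun n => Nat.iter n step (exist _ y Hy : P)).
  set (a := fun n => proj1_sig (s n)).
  assert (Hs : forall n, dwa Phi leX (a (S n)) (a n)).
  { intro n. unfold a; simpl. exact (proj1 (proj2_sig (nxt (s n)))). }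
  assert (Hax : forall n, dwa Phi leX x (a n)) by (intro n; exact (proj2_sig (s n))).
  assert (Hmono : forall n m, n <= m -> leX (a n) (a m)).
  { intros n m H. induction H. destruct PX; auto. destruct PX as [_ Tr _]. apply (Tr _ (a m)); auto. apply d0; auto. }
  destruct (proj2 CX (fun z => exists n, a n = z)) as [k Hk].
  exists k; split; [|split].
  - intros phi Hphi [j2 [Hj2 Hkj2]].
    assert (Hin : forall n, phi (a n)).
    { intro n. apply (Hs n); auto. exists j2; split; auto. destruct PX as [_ Tr _]. apply (Tr _ k); auto.
      apply Hk. eauto. }
    destruct (comm Phi Psi SD Peano.le leX phi (fun _ => True) (fun n w => bP (leX (a n) w))) as [w [pw Hw]];
      auto using nat_poset.
    + split; [intros ? ? _ _; auto| apply inD_full; auto using nat_poset].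
    + intros n n' w w' H1 H2; unfold le2; rewrite !bP_true. intros. destruct PX as [_ Tr _].
      apply (Tr _ (a n)); auto. apply (Tr _ w); auto.
    + intros n _. exists (a n); split; auto. apply bP_true. destruct PX; auto.
    + apply (proj1 Hphi k w); auto. apply Hk. intros z [n <-]. specialize (Hw n I). rewrite bP_true in Hw; auto.
  - change y with (a 0). apply Hk. eauto.
  - apply Hk. intros z [n <-]. apply d0; auto.
Qed.

Lemma cts_alg : phi_algebraic Phi leX.
Proof.
  split; auto. intros C HK HCl x.
  apply (HCl (fun k => compact Phi leX k /\ leX k x)).
  - apply (inD_down Phi JP _ _ (dwa Phi leX x) PX).
    + apply (proj2 (proj1 (d2 x))).
    + intros k [Hk Hkx] phi Hphi [j [Hj Hxj]]. apply Hk; auto. exists j; split; auto. destruct PX; eauto.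
    + intros y Hy. destruct (d4 x y Hy) as [k [Hk [H1 H2]]]. exists k; auto.
  - intros k [Hk _]; auto.
  - split.
    + intros k [_ H]; auto.
    + intros u Hu. destruct (proj2 (d2 x)) as [jx [Hjx Hxjx]]. destruct PX as [_ Tr _]. apply (Tr _ jx); auto.
      apply Hjx. intros y Hy. destruct (d4 x y Hy) as [k [Hk [H1 H2]]]. apply (Tr _ k); auto.
Qed.

End CtsAlg.
End Omega.

Section RealEx.
Variable Phi : Doctrine.
Hypothesis JP : join_doctrine Phi.
Hypothesis HN : Phi nat Peano.le.

Open Scope R_scope.

Definition T01 := {r : R | 0 <= r <= 1}.
Definition leT : rel T01 := fun a b => proj1_sig a <= proj1_sig b.
Definition v (a : T01) : R := proj1_sig a.
Lemma v_ge0 a : 0 <= v a. Proof. exact (proj1 (proj2_sig a)). Qed.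
Lemma v_le1 a : v a <= 1. Proof. exact (proj2 (proj2_sig a)). Qed.

Lemma PT : is_poset leT.
Proof.
  unfold leT; split.
  - intros; lra.
  - intros; lra.
  - intros [x px] [y py]; simpl; intros H1 H2. assert (x = y) by lra. subst. f_equal; apply proof_irrelevance.
Qed.

Definition z0 : T01 := exist _ 0 (conj (Rle_refl 0) Rle_0_1).
Definition one : T01 := exist _ 1 (conj Rle_0_1 (Rle_refl 1)).

Lemma CT : complete_lattice leT.
Proof.
  split; [exact PT|]. intros S.
  destruct (classic (exists p, S p)) as [[p Sp]|N].
  - set (E := fun r => exists q, S q /\ v q = r).
    destruct (completeness E) as [m [M1 M2]].
    + exists 1. intros r [q [_ <-]]. apply v_le1.
    + exists (v p); exists p; auto.
    + assert (m0 : 0 <= m <= 1).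
      { split.
        - apply Rle_trans with (v p). apply v_ge0. apply M1. exists p; auto.
        - apply M2. intros r [q [_ <-]]. apply v_le1. }
      exists (exist _ m m0). split.
      * intros q Sq. unfold leT; simpl. apply M1. exists q; auto.
      * intros u Hu. unfold leT; simpl. apply M2. intros r [q [Sq <-]]. apply Hu; auto.
  - exists z0. split.
    + intros q Sq. exfalso; eauto.
    + intros u _. unfold leT; simpl. apply v_ge0.
Qed.

Lemma seg_DX x : 0 < v x -> DX Phi leT (fun w => v w < v x).
Proof.
  intros Hx. split.
  - intros a b Hab Hb. unfold leT in Hab. unfold v in *. lra.
  - assert (F : forall n : nat, 0 <= v x * (1 - / INR (S n)) <= 1).
    { intro n. assert (0 < INR (S n)) by (apply lt_0_INR; lia).
      assert (1 <= INR (S n)) by (replace 1 with (INR 1) by reflexivity; apply le_INR; lia).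
      assert (0 < / INR (S n) <= 1).
      { split. apply Rinv_0_lt_compat; auto. rewrite <- Rinv_1. apply Rinv_le_contravar; lra. }
      pose proof (v_le1 x). split; nra. }
    apply (D_to_inD Phi JP Peano.le leT (fun n => exist _ _ (F n))); auto using nat_poset, PT.
    + intros n m Hnm. unfold leT; cbn [proj1_sig].
      assert (0 < INR (S n)) by (apply lt_0_INR; lia).
      assert (INR (S n) <= INR (S m)) by (apply le_INR; lia).
      assert (/ INR (S m) <= / INR (S n)) by (apply Rinv_le_contravar; auto).
      apply Rmult_le_compat_l; [lra|]. lra.
    + intros n. unfold v at 1; cbn [proj1_sig].
      assert (0 < / INR (S n)) by (apply Rinv_0_lt_compat, lt_0_INR; lia). nra.
    + intros w Hw. destruct (archimed_cor1 ((v x - v w) / v x)) as [N [HN1 HN2]].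
      { apply Rdiv_lt_0_compat; lra. }
      exists N. unfold leT; cbn [proj1_sig].
      assert (0 < INR N) by (apply lt_0_INR; lia).
      assert (INR N <= INR (S N)) by (apply le_INR; lia).
      assert (/ INR (S N) <= / INR N) by (apply Rinv_le_contravar; auto).
      set (t := / INR (S N)) in *.
      assert (t * v x < v x - v w).
      { assert (t < (v x - v w) / v x) by lra.
        apply Rmult_lt_compat_r with (r := v x) in H2; auto.
        unfold Rdiv in H2. rewrite Rmult_assoc, Rinv_l in H2; lra. }
      change (proj1_sig w) with (v w). nra.
Qed.

Lemma seg_lub x : 0 < v x -> is_lub leT (fun w => v w < v x) x.
Proof.
  intros Hx. split.
  - intros w Hw. unfold leT. fold (v w) (v x). lra.
  - intros u Hu. unfold leT. fold (v u) (v x). apply Rnot_lt_le. intro Hux.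
    assert (m0 : 0 <= (v u + v x) / 2 <= 1) by (pose proof (v_ge0 u); pose proof (v_le1 x); split; lra).
    specialize (Hu (exist _ _ m0)). unfold leT in Hu; simpl in Hu. fold (v u) in Hu.
    assert ((v u + v x) / 2 <= v u) by (apply Hu; lra). lra.
Qed.

Lemma dwa_lt x y : v y < v x -> dwa Phi leT x y.
Proof.
  intros Hyx psi [Lpsi Ipsi] [j [Hj Hxj]]. apply NNPP; intro N.
  assert (Hb : forall w, psi w -> v w < v y).
  { intros w pw. apply Rnot_le_lt. intro Hyw. apply N. apply (Lpsi y w); auto. }
  assert (leT j y) by (apply Hj; intros w pw; unfold leT; fold (v w) (v y); specialize (Hb w pw); lra).
  unfold leT in *. fold (v j) (v x) (v y) in *. lra.
Qed.

Lemma real_cts : phi_continuous Phi leT.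
Proof.
  split; [exact CT|]. intro x.
  destruct (Rlt_or_le 0 (v x)) as [Hx|Hx].
  - exists (fun w => v w < v x). split; [apply seg_DX; auto|split].
    + intros y Hy. apply dwa_lt; auto.
    + exists x; split; [apply seg_lub; auto|]. pose proof PT as [R _ _]; auto.
  - assert (Hx0 : v x = 0) by (pose proof (v_ge0 x); lra).
    destruct (classic (dwa Phi leT x x)) as [Hd|Hd].
    + exists (fun w => leT w x). split; [split|split].
      * intros a b Hab Hb. pose proof PT as [_ Tr _]; eauto.
      * apply (inD_top Phi JP _ _ x PT); auto. pose proof PT as [R _ _]; auto.
      * intros y Hy. apply (dwa_lower Phi leT x y x); auto.
      * exists x; split; [split|].
        -- intros w Hw; auto.
        -- intros u Hu. apply Hu. pose proof PT as [R _ _]; auto.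
        -- pose proof PT as [R _ _]; auto.
    + apply not_all_ex_not in Hd. destruct Hd as [psi Hpsi].
      apply imply_to_and in Hpsi. destruct Hpsi as [Dpsi Hpsi].
      apply imply_to_and in Hpsi. destruct Hpsi as [Bpsi Npsi].
      exists psi. split; [auto|split; auto].
      intros y py. exfalso. apply Npsi. apply (proj1 Dpsi x y); auto.
      unfold leT; fold (v x) (v y). pose proof (v_ge0 y). lra.
Qed.

Lemma real_not_alg : ~ phi_algebraic Phi leT.
Proof.
  intros HX.
  assert (H := proj2 HX (fun w => v w = 0)).
  assert (v one = 0); [|unfold one, v in *; simpl in *; lra].
  apply H.
  - intros k Hk. apply NNPP; intro Nk.
    assert (Hk0 : 0 < v k) by (pose proof (v_ge0 k); lra).
    assert (Hkk : v k < v k).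
    { apply (Hk (fun w => v w < v k)). apply seg_DX; auto.
      exists k; split; [apply seg_lub; auto|]. pose proof PT as [R _ _]; auto. }
    lra.
  - intros S j HS HC Hj.
    assert (leT j z0) by (apply Hj; intros s Ss; unfold leT; simpl; fold (v s); rewrite HC; auto; lra).
    unfold leT in *; simpl in *. fold (v j) in *. pose proof (v_ge0 j). lra.
Qed.

End RealEx.
Theorem corollary3p7 (Phi Psi : Doctrine) :
  join_doctrine Phi -> join_doctrine Psi -> sound_dual Phi Psi ->
  (* The functor X |-> Phi AlgLat(X,2): on objects *)
  (forall (X : Type) (leX : rel X), phi_algebraic Phi leX ->
     psiop_inf Psi (leHom (phi_hom Phi leX le2))) /\
  (* ... and on morphisms, by precomposition *)
  (forall (X : Type) (leX : rel X) (Y : Type) (leY : rel Y) (f : X -> Y),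
     phi_algebraic Phi leX -> phi_algebraic Phi leY -> phi_hom Phi leX leY f ->
     exists Hc : (forall h : Hom (phi_hom Phi leY le2),
                    phi_hom Phi leX le2 (fun x => proj1_sig h (f x))),
       psiop_hom Psi (leHom (phi_hom Phi leY le2)) (leHom (phi_hom Phi leX le2))
         (fun h => exist _ (fun x => proj1_sig h (f x)) (Hc h))) /\
  (* The functor A |-> Psi^op Inf(A,2): on objects *)
  (forall (A : Type) (leA : rel A), psiop_inf Psi leA ->
     phi_algebraic Phi (leHom (psiop_hom Psi leA le2))) /\
  (* ... and on morphisms, by precomposition *)
  (forall (A : Type) (leA : rel A) (B : Type) (leB : rel B) (g : A -> B),
     psiop_inf Psi leA -> psiop_inf Psi leB -> psiop_hom Psi leA leB g ->
     exists Hc : (forall h : Hom (psiop_hom Psi leB le2),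
                    psiop_hom Psi leA le2 (fun a => proj1_sig h (g a))),
       phi_hom Phi (leHom (psiop_hom Psi leB le2)) (leHom (psiop_hom Psi leA le2))
         (fun h => exist _ (fun a => proj1_sig h (g a)) (Hc h))) /\
  (* unit: evaluation X -> Psi^op Inf(Phi AlgLat(X,2),2) is an isomorphism in Phi AlgLat *)
  (forall (X : Type) (leX : rel X), phi_algebraic Phi leX ->
     exists Hev : (forall x : X,
                     psiop_hom Psi (leHom (phi_hom Phi leX le2)) le2
                       (fun h => proj1_sig h x)),
       is_iso (@phi_hom Phi) leX
         (leHom (psiop_hom Psi (leHom (phi_hom Phi leX le2)) le2))
         (fun x => exist _ (fun h => proj1_sig h x) (Hev x))) /\
  (* counit: evaluation A -> Phi AlgLat(Psi^op Inf(A,2),2) is an isomorphism in Psi^op Inf *)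
  (forall (A : Type) (leA : rel A), psiop_inf Psi leA ->
     exists Hev : (forall a : A,
                     phi_hom Phi (leHom (psiop_hom Psi leA le2)) le2
                       (fun h => proj1_sig h a)),
       is_iso (@psiop_hom Psi) leA
         (leHom (phi_hom Phi (leHom (psiop_hom Psi leA le2)) le2))
         (fun a => exist _ (fun h => proj1_sig h a) (Hev a))) /\
  (* Phi AlgLat = Phi CtsLat iff omega notin Phi iff omega in Psi *)
  ((forall (T : Type) (le : rel T), phi_continuous Phi le <-> phi_algebraic Phi le)
     <-> ~ Phi nat Peano.le) /\
  (~ Phi nat Peano.le <-> Psi nat Peano.le).
Proof.
  intros JP JQ SD.
  split; [intros X leX HX; eapply partA; eauto; exact (proj1 HX)|].
  split; [intros; eapply morphB; eauto|].
  split; [intros; eapply partC; eauto|].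
  split; [intros; eapply morphD; eauto|].
  split; [intros; eapply unit_iso; eauto|].
  split; [intros; eapply counit_iso; eauto|].
  split.
  - split.
    + intros Heq HPn. apply (real_not_alg Phi JP HPn). apply Heq. apply (real_cts Phi JP HPn).
    + intros Hn T le. split.
      * intro Hc. exact (cts_alg Phi Psi JP JQ SD (omega_psi Phi Psi JP JQ SD Hn) T le Hc).
      * intro Ha. exact (alg_cts Phi JP le Ha).
  - split.
    + exact (omega_psi Phi Psi JP JQ SD).
    + intros HQ HP. exact (omega_not_both Phi Psi JP JQ SD HQ HP).
Qed.
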